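(* For all $\alpha>1$ and all real numbers $0<a<b$, \[ \frac{(b+1)^\alpha-a^\alpha}{b^\alpha-a^\alpha}\ge\frac{(b+1)^{\alpha-1}-a^{\alpha-1}}{b^{\alpha-1}-a^{\alpha-1}}. \] *)

(* Defs.v *)
(* real powers via Rpower (x^y = exp (y ln x), used only for x > 0). *)
From Stdlib Require Import Reals.

(* Main.v *)
Require Import Defs.
From Stdlib Require Import Reals Lra Psatz.
Open Scope R_scope.

Lemma Rpow_pos x y : 0 < Rpower x y.
Proof. unfold Rpower; apply exp_pos. Qed.

Lemma hderiv (alpha b c : R) : 1 < alpha -> 0 < c ->
  derivable_pt_lim (fun x => Rpower x alpha - (alpha * b / (alpha - 1)) * Rpower x (alpha - 1)) c
    (alpha * Rpower c (alpha - 1 - 1) * (c - b)).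
Proof.
  intros ha hc.
  replace (alpha * Rpower c (alpha - 1 - 1) * (c - b)) with
    (alpha * Rpower c (alpha - 1) - (alpha * b / (alpha - 1)) * ((alpha - 1) * Rpower c (alpha - 1 - 1))).
  - apply derivable_pt_lim_minus.
    + apply derivable_pt_lim_power; lra.
    + apply derivable_pt_lim_scal. apply derivable_pt_lim_power; lra.
  - replace (alpha - 1) with ((alpha - 1 - 1) + 1) at 1 by ring.
    rewrite Rpower_plus, Rpower_1 by lra. field. lra.
Qed.

Theorem lemma2 (alpha a b : R) (halpha : 1 < alpha) (ha : 0 < a) (hab : a < b) :
  (Rpower (b + 1) alpha - Rpower a alpha) / (Rpower b alpha - Rpower a alpha)
  >= (Rpower (b + 1) (alpha - 1) - Rpower a (alpha - 1))
     / (Rpower b (alpha - 1) - Rpower a (alpha - 1)).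
Proof.
  set (K := alpha * b / (alpha - 1)).
  set (h := (fun x => Rpower x alpha - K * Rpower x (alpha - 1))).
  assert (hK : 0 < K) by (unfold K; apply Rdiv_lt_0_compat; nra).
  assert (H1 : h b <= h (b + 1)).
  { destruct (MVT_cor2 h (fun c => alpha * Rpower c (alpha - 1 - 1) * (c - b)) b (b+1))
      as [c [e hc]]; [lra| intros c' hc'; unfold h; apply hderiv; lra |].
    cbv beta in e. pose proof (Rpow_pos c (alpha - 1 - 1)).
    assert (0 < alpha * Rpower c (alpha - 1 - 1) * (c - b)) by (apply Rmult_lt_0_compat; [apply Rmult_lt_0_compat|]; lra).
    nra. }
  assert (H0 : h b <= h a).
  { destruct (MVT_cor2 h (fun c => alpha * Rpower c (alpha - 1 - 1) * (c - b)) a b)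
      as [c [e hc]]; [lra| intros c' hc'; unfold h; apply hderiv; lra |].
    cbv beta in e. pose proof (Rpow_pos c (alpha - 1 - 1)).
    assert (0 < alpha * Rpower c (alpha - 1 - 1) * (b - c)) by (apply Rmult_lt_0_compat; [apply Rmult_lt_0_compat|]; lra).
    assert (0 < alpha * Rpower c (alpha - 1 - 1) * (b - c) * (b - a)) by (apply Rmult_lt_0_compat; lra).
    assert (E : alpha * Rpower c (alpha - 1 - 1) * (c - b) * (b - a) = - (alpha * Rpower c (alpha - 1 - 1) * (b - c) * (b - a))) by ring.
    lra. }
  unfold h in H0, H1.
  assert (G0 : Rpower a (alpha - 1) < Rpower b (alpha - 1)) by (apply Rlt_Rpower_l; lra).
  assert (G1 : Rpower b (alpha - 1) < Rpower (b+1) (alpha - 1)) by (apply Rlt_Rpower_l; lra).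
  assert (F0 : Rpower a alpha < Rpower b alpha) by (apply Rlt_Rpower_l; lra).
  set (A0 := Rpower a alpha) in *. set (B0 := Rpower b alpha) in *. set (C0 := Rpower (b+1) alpha) in *.
  set (A1 := Rpower a (alpha-1)) in *. set (B1 := Rpower b (alpha-1)) in *.
  set (C1 := Rpower (b+1) (alpha-1)) in *.
  apply Rle_ge.
  apply (Rmult_le_reg_r ((B0 - A0) * (B1 - A1))); [nra|].
  unfold Rdiv.
  replace ((C1 - A1) * / (B1 - A1) * ((B0 - A0) * (B1 - A1))) with ((C1 - A1) * (B0 - A0)) by (field; lra).
  replace ((C0 - A0) * / (B0 - A0) * ((B0 - A0) * (B1 - A1))) with ((C0 - A0) * (B1 - A1)) by (field; lra).
  assert (X : (C0 - B0) * (B1 - A1) >= (C1 - B1) * (B0 - A0)).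
  { assert (K * (C1 - B1) * (B1 - A1) <= (C0 - B0) * (B1 - A1)) by nra.
    assert (K * (C1 - B1) * (B1 - A1) >= (C1 - B1) * (B0 - A0)) by nra.
    lra. }
  nra.
Qed.
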